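(* Let $\Omega$ be a measure space and $Z:=L^2(\Omega)$. Let $(a^k)$ and $(b^k)$ be bounded sequences in $Z$. If $\min\{a^k,b^k\}\to 0$ in $Z$, then $\langle a^k,b^k\rangle\to 0$.
   Context: $\min\{a,b\}$ denotes the pointwise minimum of $a,b\in Z$, and $\langle\cdot,\cdot\rangle$ is the inner product of $L^2(\Omega)$. *)

(* Defs.v *)
From HB Require Import structures.
From mathcomp Require Import all_boot all_order all_algebra.
From mathcomp Require Import all_classical all_reals all_analysis.
Set Implicit Arguments. Unset Strict Implicit. Unset Printing Implicit Defensive.
Import Order.TTheory GRing.Theory Num.Theory.
Local Open Scope classical_set_scope.
Local Open Scope ring_scope.

(* f belongs to Z = L^2(Omega, mu): measurable with finite L^2 norm
   (elements of L^2 are represented by square-integrable representatives). *)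
Definition inL2 d (T : measurableType d) (R : realType)
  (mu : {measure set T -> \bar R}) (f : T -> R) : Prop :=
  measurable_fun setT f /\ (Lnorm mu 2%:E (EFin \o f) < +oo)%E.

Definition L2norm d (T : measurableType d) (R : realType)
  (mu : {measure set T -> \bar R}) (f : T -> R) : \bar R :=
  Lnorm mu 2%:E (EFin \o f).

Definition L2inner d (T : measurableType d) (R : realType)
  (mu : {measure set T -> \bar R}) (f g : T -> R) : R :=
  Rintegral mu setT (fun x => f x * g x)%R.

(* Main.v *)
Require Import Defs.
From HB Require Import structures.
From mathcomp Require Import all_boot all_order all_algebra.
From mathcomp Require Import all_classical all_reals all_analysis.
From mathcomp Require Import measurable_realfun.
Import Order.TTheory GRing.Theory Num.Theory.
Local Open Scope classical_set_scope.
Local Open Scope ring_scope.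

Lemma key (d : measure_display) (T : measurableType d) (R : realType)
  (mu : {measure set T -> \bar R}) (f g : T -> R) :
  measurable_fun setT f -> measurable_fun setT g ->
  (`| \int[mu]_x (f x * g x)%:E | <=
   L2norm mu (fun x => Order.min (f x) (g x)) * L2norm mu f +
   L2norm mu (fun x => Order.min (f x) (g x)) * L2norm mu g)%E.
Proof.
move=> mf mg.
set m := (fun x => Order.min (f x) (g x)).
have mm : measurable_fun setT m by exact: measurable_realfun.measurable_minr.
have h2 : (2:R)^-1 + 2^-1 = 1 by rewrite -div1r -splitr.
have H1 := hoelder mu mm mf (ltr0Sn _ 1) (ltr0Sn _ 1) h2.
have H2 := hoelder mu mm mg (ltr0Sn _ 1) (ltr0Sn _ 1) h2.
rewrite Lnorm1 in H1; rewrite Lnorm1 in H2.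
apply: le_trans; first apply: le_abse_integral => //.
  by apply/measurable_realfun.measurable_EFinP; exact: measurable_realfun.measurable_funM.
have e1 : (fun x => `|(EFin \o (m \* f)%R) x|%E) = (fun x : T => ((`|m x * f x|)%:E : \bar R)).
  by apply/funext.
have e2 : (fun x => `|(EFin \o (m \* g)%R) x|%E) = (fun x : T => ((`|m x * g x|)%:E : \bar R)).
  by apply/funext.
rewrite e1 in H1; rewrite e2 in H2.
apply: le_trans; last exact: leeD H1 H2.
have mMf : measurable_fun setT (fun x : T => ((`|m x * f x|)%:E : \bar R)).
  by do 2 apply: measurableT_comp => //; exact: measurable_realfun.measurable_funM.
have mMg : measurable_fun setT (fun x : T => ((`|m x * g x|)%:E : \bar R)).
  by do 2 apply: measurableT_comp => //; exact: measurable_realfun.measurable_funM.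
have p0 : forall h : T -> R, forall x, [set: T] x -> (0 <= (`|h x|)%:E)%E by move=> h x _; rewrite lee_fin.
rewrite -(ge0_integralD mu measurableT (p0 _) mMf (p0 _) mMg).
apply: ge0_le_integral => //.
- by apply: measurableT_comp => //; apply/measurable_realfun.measurable_EFinP; exact: measurable_realfun.measurable_funM.
- exact: emeasurable_funD mMf mMg.
move=> x _ /=; rewrite -EFinD lee_fin !normrM -mulrDr /m.
case: (leP (f x) (g x)) => fg.
- by rewrite ler_wpM2l // lerDr.
- by rewrite [X in X <= _]mulrC ler_wpM2l // lerDl.
Qed.

Theorem lemma2p2 (d : measure_display) (T : measurableType d) (R : realType)
  (mu : {measure set T -> \bar R}) (a b : nat -> T -> R) :
  (forall k, inL2 mu (a k)) -> (forall k, inL2 mu (b k)) ->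
  (exists M : R, forall k, (L2norm mu (a k) <= M%:E)%E) ->
  (exists M : R, forall k, (L2norm mu (b k) <= M%:E)%E) ->
  (fun k => L2norm mu (fun x => Order.min (a k x) (b k x))) @ \oo --> 0%E ->
  (fun k => L2inner mu (a k) (b k)) @ \oo --> 0%R.
Proof.
move=> Ha Hb [Ma hMa] [Mb hMb] Hm.
set N := fun k => L2norm mu (fun x => Order.min (a k x) (b k x)) in Hm.
have /fine_cvgP [Nfin Ncvg] := Hm.
apply: (@squeeze_cvgr _ _ _ _ (fun k => - (fine (N k) * (Ma + Mb)))
   (fun k => fine (N k) * (Ma + Mb))).
- near=> k.
  have Nk : N k \is a fin_num by near: k.
  have N0 : (0 <= N k)%E by exact: Lnorm_ge0.
  have := @key _ _ _ mu _ _ (Ha k).1 (Hb k).1.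
  rewrite /L2inner /Rintegral.
  move: (\int[mu]_(x in _) _)%E => u.
  move=> hu.
  have hu' : (`|u| <= (fine (N k) * (Ma + Mb))%:E)%E.
    apply: le_trans hu _.
    rewrite EFinM fineK; last exact: Nk.
    rewrite EFinD muleDr ?Nk //.
    apply: leeD; apply: lee_wpmul2l => //.
  rewrite -ler_norml.
  move: hu'; clear hu; case: u => [r| |] //=.
- rewrite -oppr0 -(mul0r (Ma + Mb)); apply: cvgN; exact: cvgMl.
- rewrite -(mul0r (Ma + Mb)); exact: cvgMl.
Unshelve. all: by end_near.
Qed.
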